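(* Let $P:\mathbb{Z}\to\mathbb{RP}^2$ be a $3$-nice sequence with every three consecutive points non-collinear, let $i\in\mathbb{Z}$, and let $x_{2i},x_{2i+1}$ be the corner invariants at index $i$. Suppose $P_{i-2},P_{i-1},P_i,P_{i+1}\in\mathbb{A}^2$, the triples $(P_{i-2},P_{i-1},P_i)$ and $(P_{i-1},P_i,P_{i+1})$ are positive, the quadrilateral with vertices $P_{i-2},P_{i-1},P_i,P_{i+1}$ (in this order) is convex, and $(x_{2i},x_{2i+1})\in(1,\infty)\times(0,1)$. Then $P_{i+2}\in\operatorname{int}(P_{i-2},P_{i-1},P_{i+1})$; moreover the quadrilateral with vertices $P_{i-1},P_i,P_{i+1},P_{i+2}$ is convex and the triples $(P_i,P_{i+1},P_{i+2})$ and $(P_{i-1},P_i,P_{i+2})$ are positive.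
   Context: The affine patch $\mathbb{A}^2=\{[x:y:1]\}\subset\mathbb{RP}^2$ is identified with $\mathbb{R}^2$. For $V_1,V_2,V_3\in\mathbb{A}^2$ with affine coordinates $\tilde V_j=(x_j,y_j,1)$, $\mathcal{O}(V_1,V_2,V_3)=\det(\tilde V_1,\tilde V_2,\tilde V_3)$; the triple is positive if $\mathcal{O}>0$. $\operatorname{int}(V_1,V_2,V_3)$ is the interior of the affine triangle. $P$ is $3$-nice if $P_j,P_{j+1},P_{j+3},P_{j+4}$ are in general position for every $j$. Inverse cross ratio: for four collinear points $A,B,C,D$, map their line projectively to the $x$-axis with coordinates $a,b,c,d$ and set $\chi(A,B,C,D)=\frac{(a-b)(c-d)}{(a-c)(b-d)}$ (value in $\mathbb{R}\cup\{\infty\}$, projectively invariant). Corner invariants: $x_{2i}=\chi(P_{i-2},P_{i-1},P_{i-2}P_{i-1}\cap P_iP_{i+1},P_{i-2}P_{i-1}\cap P_{i+1}P_{i+2})$ and $x_{2i+1}=\chi(P_{i+2},P_{i+1},P_{i+2}P_{i+1}\cap P_iP_{i-1},P_{i+2}P_{i+1}\cap P_{i-1}P_{i-2})$. *)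

(* Defs.v *)
(* Points of RP^2 are represented by nonzero homogeneous
   coordinate vectors in R^3 (R a real field); every notion below is
   invariant under rescaling of representatives. *)
From HB Require Import structures.
From mathcomp Require Import all_boot all_order all_algebra.
Set Implicit Arguments. Unset Strict Implicit. Unset Printing Implicit Defensive.
Import Order.TTheory GRing.Theory Num.Theory.
Local Open Scope ring_scope.

Section Proj.
Variable R : realFieldType.

Definition vec3 := (R * R * R)%type.
Definition vx (v : vec3) : R := v.1.1.
Definition vy (v : vec3) : R := v.1.2.
Definition vz (v : vec3) : R := v.2.
Definition mkv (x y z : R) : vec3 := (x, y, z).
Definition vzero : vec3 := mkv 0 0 0.

Definition cross (u v : vec3) : vec3 :=
  mkv (vy u * vz v - vz u * vy v)
      (vz u * vx v - vx u * vz v)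
      (vx u * vy v - vy u * vx v).
Definition dot (u v : vec3) : R := vx u * vx v + vy u * vy v + vz u * vz v.
Definition det3 (u v w : vec3) : R := dot (cross u v) w.

Definition collinear (u v w : vec3) : Prop := det3 u v w = 0.

Definition gen_pos4 (a b c d : vec3) : Prop :=
  [/\ ~ collinear a b c, ~ collinear a b d, ~ collinear a c d & ~ collinear b c d].

Definition join (u v : vec3) : vec3 := cross u v.
Definition meet (l m : vec3) : vec3 := cross l m.

(* Inverse cross ratio chi(A,B,C,D) of four collinear points, A <> B.
   Writing n for the line AB, each u x v (u, v on the line) equals
   [u,v] * n / |n|^2-scaled, where [u,v] is the 2x2 determinant of
   coordinates of u, v on the line; for points [a:1],...,[d:1] of the
   x-axis [u,v] = a - b, so this is (a-b)(c-d)/((a-c)(b-d)).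
   (Value infinity, i.e. zero denominator, gives 0 by MathComp's x/0 = 0
   convention; it never satisfies the interval hypotheses used below.) *)
Definition br (n u v : vec3) : R := dot (cross u v) n.
Definition chi (A B C D : vec3) : R :=
  let n := join A B in
  (br n A B * br n C D) / (br n A C * br n B D).

Definition in_affine (u : vec3) : Prop := vz u != 0.
Definition aff (u : vec3) : vec3 := mkv (vx u / vz u) (vy u / vz u) 1.

Definition orient (u v w : vec3) : R := det3 (aff u) (aff v) (aff w).
Definition positive_triple (u v w : vec3) : Prop :=
  [/\ in_affine u, in_affine v, in_affine w & 0 < orient u v w].

Definition in_int_triangle (p v1 v2 v3 : vec3) : Prop :=
  [/\ in_affine p, in_affine v1, in_affine v2, in_affine v3 &
   exists a b c : R, [/\ 0 < a, 0 < b, 0 < c, a + b + c = 1 &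
     vx (aff p) = a * vx (aff v1) + b * vx (aff v2) + c * vx (aff v3) /\
     vy (aff p) = a * vy (aff v1) + b * vy (aff v2) + c * vy (aff v3)]].

Definition convex_quad (a b c d : vec3) : Prop :=
  [/\ in_affine a, in_affine b, in_affine c, in_affine d &
   (0 < orient a b c /\ 0 < orient b c d /\ 0 < orient c d a /\ 0 < orient d a b) \/
   (orient a b c < 0 /\ orient b c d < 0 /\ orient c d a < 0 /\ orient d a b < 0)].

Definition proj_seq (P : int -> vec3) : Prop := forall j, P j != vzero.

Definition three_nice (P : int -> vec3) : Prop :=
  forall j : int, gen_pos4 (P j) (P (j + 1)) (P (j + 3)) (P (j + 4)).

Definition consec_noncollinear (P : int -> vec3) : Prop :=
  forall j : int, ~ collinear (P j) (P (j + 1)) (P (j + 2)).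

Definition corner_even (P : int -> vec3) (i : int) : R :=
  chi (P (i - 2)) (P (i - 1))
      (meet (join (P (i - 2)) (P (i - 1))) (join (P i) (P (i + 1))))
      (meet (join (P (i - 2)) (P (i - 1))) (join (P (i + 1)) (P (i + 2)))).

Definition corner_odd (P : int -> vec3) (i : int) : R :=
  chi (P (i + 2)) (P (i + 1))
      (meet (join (P (i + 2)) (P (i + 1))) (join (P i) (P (i - 1))))
      (meet (join (P (i + 2)) (P (i + 1))) (join (P (i - 1)) (P (i - 2)))).

End Proj.

(* Main.v *)
Require Import Defs.
From HB Require Import structures.
From mathcomp Require Import all_boot all_order all_algebra.
From mathcomp Require Import ring lra.
Import Order.TTheory GRing.Theory Num.Theory.
Local Open Scope ring_scope.

Section H.
Variable R : realFieldType.
Implicit Types A B C D E u v w X Y : vec3 R.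
Definition eexpr (A B C D E : vec3 R) :=
  (det3 A C D * det3 B D E - det3 B C D * det3 A D E) / (det3 A C D * det3 B D E).

Definition scale (k : R) u := mkv (k * vx u) (k * vy u) (k * vz u).

Lemma aff_scale u : vz u != 0 -> scale (vz u) (aff u) = u.
Proof.
case: u => [[x y] z]; rewrite /scale /aff /vx /vy /vz /mkv /= => hz.
by congr (_,_,_); rewrite ?mulr1 // mulrC divfK.
Qed.

Arguments aff_scale {u}.

Lemma scale1 u : scale 1 u = u.
Proof. by case: u => [[x y] z]; rewrite /scale /vx /vy /vz /mkv /= !mul1r. Qed.

Lemma det3_scale k l m u v w :
  det3 (scale k u) (scale l v) (scale m w) = k * l * m * det3 u v w.
Proof. rewrite /scale /det3 /cross /dot /vx /vy /vz /mkv /=; ring. Qed.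

Lemma cancelK (N D K : R) : K != 0 -> (K * N) / (K * D) = N / D.
Proof. by move=> hK; rewrite -mulf_div divff // mul1r. Qed.

Lemma eexpr_scale k1 k2 k3 k4 k5 u1 u2 u3 u4 u5 :
  k1 != 0 -> k2 != 0 -> k3 != 0 -> k4 != 0 -> k5 != 0 ->
  eexpr (scale k1 u1) (scale k2 u2) (scale k3 u3) (scale k4 u4) (scale k5 u5) =
  eexpr u1 u2 u3 u4 u5.
Proof.
move=> h1 h2 h3 h4 h5; rewrite /eexpr !det3_scale.
set K := k1 * k2 * k3 * k4 * k4 * k5.
have hK : K != 0 by rewrite /K !mulf_neq0.
match goal with |- _ = ?n / ?d => rewrite -(@cancelK n d K hK) end.
congr (_ / _); rewrite /K; ring.
Qed.
Definition lin (k : R) u (l : R) v : vec3 R :=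
  mkv (k * vx u + l * vx v) (k * vy u + l * vy v) (k * vz u + l * vz v).

Lemma ext3 u v : vx u = vx v -> vy u = vy v -> vz u = vz v -> u = v.
Proof. by case: u => [[? ?] ?]; case: v => [[? ?] ?]; rewrite /vx /vy /vz /= => -> -> ->. Qed.

Lemma meet_lin A B C D :
  meet (join A B) (join C D) = lin (- det3 B C D) A (det3 A C D) B.
Proof.
case: A => [[a1 a2] a3]; case: B => [[b1 b2] b3];
case: C => [[c1 c2] c3]; case: D => [[d1 d2] d3].
by apply: ext3; rewrite /= /meet /join /lin /det3 /cross /dot /vx /vy /vz /=; ring.
Qed.

Lemma chi_lin A B x1 x2 y1 y2 :
  dot (cross A B) (cross A B) != 0 ->
  chi A B (lin x1 A x2 B) (lin y1 A y2 B) = (x1 * y2 - x2 * y1) / (x2 * (- y1)).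
Proof.
move=> hn.
rewrite /chi /join.
set nn := dot (cross A B) (cross A B).
have e1 : br (cross A B) A B = nn by [].
have e2 : br (cross A B) (lin x1 A x2 B) (lin y1 A y2 B) = (x1 * y2 - x2 * y1) * nn.
  rewrite /nn /br /lin /cross /dot /vx /vy /vz /=; ring.
have e3 : br (cross A B) A (lin x1 A x2 B) = x2 * nn.
  rewrite /nn /br /lin /cross /dot /vx /vy /vz /=; ring.
have e4 : br (cross A B) B (lin y1 A y2 B) = (- y1) * nn.
  rewrite /nn /br /lin /cross /dot /vx /vy /vz /=; ring.
rewrite e1 e2 e3 e4.
have -> : nn * ((x1 * y2 - x2 * y1) * nn) = (nn * nn) * (x1 * y2 - x2 * y1) by ring.
have -> : x2 * nn * (- y1 * nn) = (nn * nn) * (x2 * (- y1)) by ring.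
by rewrite -mulf_div divff ?mul1r // mulf_neq0.
Qed.

Lemma chiG A B C D E :
  dot (cross A B) (cross A B) != 0 ->
  chi A B (meet (join A B) (join C D)) (meet (join A B) (join D E)) = eexpr A B C D E.
Proof.
move=> hn; rewrite !meet_lin chi_lin // /eexpr.
congr (_ / _); first ring.
by apply: f_equal; ring.
Qed.

Lemma chi_deg A B X Y : dot (cross A B) (cross A B) = 0 -> chi A B X Y = 0.
Proof.
move=> h.
have hz : cross A B = mkv 0 0 0.
  move: (cross A B) h => [[n1 n2] n3]; rewrite /dot /vx /vy /vz /= => h.
  have h1 : n1 = 0 by nra.
  have h2 : n2 = 0 by nra.
  have h3 : n3 = 0 by nra.
  by rewrite h1 h2 h3.
by rewrite /chi /join hz /br /dot /vx /vy /vz /= !mulr0 !addr0 !mul0r.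
Qed.
Lemma sgn1 (X Y : R) : 1 < X / Y -> (0 < Y /\ Y < X) \/ (Y < 0 /\ X < Y).
Proof.
case: (ltgtP Y 0) => hY.
- by rewrite ltr_ndivlMr // mul1r => h; right.
- by rewrite ltr_pdivlMr // mul1r => h; left.
- by rewrite hY invr0 mulr0 ltr10.
Qed.

Lemma sgn2 (X Y : R) : 0 < X / Y < 1 -> (0 < Y /\ 0 < X /\ X < Y) \/ (Y < 0 /\ X < 0 /\ Y < X).
Proof.
case: (ltgtP Y 0) => hY /andP [h1 h2].
- right; move: h1 h2; rewrite ltr_ndivlMr // ltr_ndivrMr // !mul0r mul1r => h1 h2; lra.
- left; move: h1 h2; rewrite ltr_pdivlMr // ltr_pdivrMr // !mul0r mul1r => h1 h2; lra.
- by move: h1; rewrite hY invr0 mulr0 ltxx.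
Qed.

Lemma mainalg (a b c d e : vec3 R) : vz a = 1 -> vz b = 1 -> vz d = 1 ->
  0 < det3 a b c -> 0 < det3 b c d -> 0 < det3 c d a -> 0 < det3 d a b ->
  1 < eexpr a b c d e -> 0 < eexpr e d c b a < 1 ->
  vz e != 0 /\ exists al be ga : R, [/\ 0 < al, 0 < be, 0 < ga, al + be + ga = 1 &
     aff e = mkv (al * vx a + be * vx b + ga * vx d)
                 (al * vy a + be * vy b + ga * vy d) 1].
Proof.
move=> za zb zd habc hbcd hcda hdab H1 H2.
have E1 : eexpr a b c d e = (det3 c d a * det3 e b d + det3 b c d * det3 a e d) /
                            (det3 c d a * det3 e b d).
  rewrite /eexpr /det3 /cross /dot /vx /vy /vz /mkv /=.
  congr (_ / _); ring.
have E2 : eexpr e d c b a = (det3 a b c * det3 e b d) /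
                            (det3 a b c * det3 e b d + det3 b c d * det3 a b e).
  rewrite /eexpr /det3 /cross /dot /vx /vy /vz /mkv /=.
  congr (_ / _); ring.
have Ez : det3 d a b * vz e = det3 e b d + det3 a e d + det3 a b e.
  move: za zb zd; rewrite /det3 /cross /dot /vx /vy /vz /mkv /= => -> -> ->; ring.
have Ex : det3 d a b * vx e = det3 e b d * vx a + det3 a e d * vx b + det3 a b e * vx d.
  rewrite /det3 /cross /dot /vx /vy /vz /mkv /=; ring.
have Ey : det3 d a b * vy e = det3 e b d * vy a + det3 a e d * vy b + det3 a b e * vy d.
  rewrite /det3 /cross /dot /vx /vy /vz /mkv /=; ring.
move: H1 H2 Ez Ex Ey; rewrite E1 E2.
move: (det3 e b d) (det3 a e d) (det3 a b e) (det3 d a b) hdab => p q r D hD.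
move: (det3 a b c) (det3 b c d) (det3 c d a) habc hbcd hcda => k1 k2 k3 h1 h2 h3.
move=> /sgn1 H1 /sgn2 H2 Ez Ex Ey.
have sg : (0 < p /\ 0 < q /\ 0 < r) \/ (p < 0 /\ q < 0 /\ r < 0).
  case: H1 => [[y1 y2]|[y1 y2]]; case: H2 => [[w1 [w2 w3]]|[w1 [w2 w3]]].
  - left; split; first nra. split; nra.
  - exfalso; nra.
  - exfalso; nra.
  - right; split; first nra. split; nra.
set t := p + q + r.
have ht : t != 0 by rewrite /t; case: sg => [[? [? ?]]|[? [? ?]]]; [apply/lt0r_neq0 | apply/ltr0_neq0]; lra.
have hze : vz e != 0.
  apply/eqP => h; move: Ez; rewrite h mulr0 -/t => h'; by move: ht; rewrite -h' eqxx.
have pos : forall x, (0 < x /\ 0 < t) \/ (x < 0 /\ t < 0) -> 0 < x / t.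
  move=> x [[? ?]|[? ?]]; first exact: divr_gt0.
  by rewrite -mulrNN -invrN; apply: divr_gt0; rewrite oppr_gt0.
have Dn : D != 0 by apply/lt0r_neq0.
split=> //; exists (p / t), (q / t), (r / t); split.
- apply: pos; rewrite /t; case: sg => [[? [? ?]]|[? [? ?]]]; [left|right]; lra.
- apply: pos; rewrite /t; case: sg => [[? [? ?]]|[? [? ?]]]; [left|right]; lra.
- apply: pos; rewrite /t; case: sg => [[? [? ?]]|[? [? ?]]]; [left|right]; lra.
- by rewrite -!mulrDl divff.
rewrite /aff; congr (mkv _ _ _).
- have -> : vx e / vz e = (D * vx e) / (D * vz e) by rewrite -mulf_div divff // mul1r.
  rewrite Ex Ez -/t.
  by rewrite !mulrDl !(mulrAC _ _ t^-1).
- have -> : vy e / vz e = (D * vy e) / (D * vz e) by rewrite -mulf_div divff // mul1r.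
  rewrite Ey Ez -/t.
  by rewrite !mulrDl !(mulrAC _ _ t^-1).
Qed.

Lemma cross0 (n : vec3 R) : dot n n = 0 -> n = mkv 0 0 0.
Proof.
move: n => [[n1 n2] n3]; rewrite /dot /vx /vy /vz /= => h.
have h1 : n1 = 0 by nra.
have h2 : n2 = 0 by nra.
have h3 : n3 = 0 by nra.
by rewrite h1 h2 h3.
Qed.

Lemma nondeg u v w : det3 u v w != 0 -> dot (cross u v) (cross u v) != 0.
Proof.
move=> h; apply/eqP => /cross0 e; move: h.
by rewrite /det3 e /dot /vx /vy /vz /= !mul0r !addr0 eqxx.
Qed.

Lemma lin_det u v a b d (al be ga : R) : vz a = 1 -> vz b = 1 -> vz d = 1 ->
  al + be + ga = 1 ->
  det3 u v (mkv (al * vx a + be * vx b + ga * vx d) (al * vy a + be * vy b + ga * vy d) 1)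
  = al * det3 u v a + be * det3 u v b + ga * det3 u v d.
Proof.
move=> za zb zd hs.
have -> : ga = 1 - al - be by lra.
move: za zb zd; rewrite /det3 /cross /dot /vx /vy /vz /mkv /= => -> -> ->; ring.
Qed.

Lemma det3_cyc u v w : det3 u v w = det3 v w u.
Proof. rewrite /det3 /cross /dot /vx /vy /vz /mkv /=; ring. Qed.

Lemma det3_0 u v : det3 u v v = 0.
Proof. rewrite /det3 /cross /dot /vx /vy /vz /mkv /=; ring. Qed.

Lemma det3_0' u v : det3 u v u = 0.
Proof. rewrite /det3 /cross /dot /vx /vy /vz /mkv /=; ring. Qed.

Lemma core A B C D E :
  in_affine A -> in_affine B -> in_affine C -> in_affine D ->
  positive_triple A B C -> convex_quad A B C D ->
  1 < chi A B (meet (join A B) (join C D)) (meet (join A B) (join D E)) ->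
  0 < chi E D (meet (join E D) (join C B)) (meet (join E D) (join B A)) < 1 ->
  [/\ in_int_triangle E A B D, convex_quad B C D E, positive_triple C D E &
      positive_triple B C E].
Proof.
move=> hA hB hC hD [_ _ _ pABC] [_ _ _ _ cq] H1 H2.
have [o1 [o2 [o3 o4]]] :
    0 < orient A B C /\ 0 < orient B C D /\ 0 < orient C D A /\ 0 < orient D A B.
  case: cq => // [[h _]]; exfalso; lra.
have nAB : dot (cross A B) (cross A B) != 0.
  apply: (@nondeg _ _ C).
  rewrite -(aff_scale hA) -(aff_scale hB) -(aff_scale hC) det3_scale.
  by rewrite !mulf_neq0 // lt0r_neq0.
rewrite chiG // in H1.
have nED : dot (cross E D) (cross E D) != 0.
  by apply/eqP => h; move: H2; rewrite chi_deg // ltxx.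
rewrite chiG // in H2.
have t1 := eexpr_scale (vz A) (vz B) (vz C) (vz D) 1 (aff A) (aff B) (aff C) (aff D) E hA hB hC hD (oner_neq0 R).
rewrite scale1 !aff_scale // in t1.
have t2 := eexpr_scale 1 (vz D) (vz C) (vz B) (vz A) E (aff D) (aff C) (aff B) (aff A) (oner_neq0 R) hD hC hB hA.
rewrite scale1 !aff_scale // in t2.
rewrite t1 in H1; rewrite t2 in H2.
have [hzE [al [be [ga [p1 p2 p3 hs hF]]]]] :=
  @mainalg (aff A) (aff B) (aff C) (aff D) E (erefl _) (erefl _) (erefl _) o1 o2 o3 o4 H1 H2.
move: o1 o2 o3 o4; rewrite /in_int_triangle /convex_quad /positive_triple /orient.
have za : vz (aff A) = 1 by []. have zb : vz (aff B) = 1 by [].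
have zd : vz (aff D) = 1 by [].
move: (aff A) (aff B) (aff C) (aff D) za zb zd hF => a b c d za zb zd hF o1 o2 o3 o4.
have d1 : det3 c d (aff E) = al * det3 c d a + be * det3 b c d.
  by rewrite hF lin_det // det3_0 mulr0 addr0 (det3_cyc c d b) (det3_cyc d b c).
have d2 : det3 d (aff E) b = al * det3 d a b.
  by rewrite det3_cyc det3_cyc hF lin_det // det3_0 det3_0' !mulr0 !addr0 det3_cyc.
have d4 : det3 b c (aff E) = al * det3 a b c + ga * det3 b c d.
  by rewrite hF lin_det // det3_0' mulr0 addr0 (det3_cyc b c a) (det3_cyc c a b).
have d3 : det3 (aff E) b c = al * det3 a b c + ga * det3 b c d.
  by rewrite det3_cyc.
split.
- split => //; exists al, be, ga; split => //; by rewrite hF; split.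
- split => //; left; rewrite d1 d2 d3; (repeat split); nra.
- split => //; rewrite d1; nra.
- split => //; rewrite d4; nra.
Qed.
End H.

Theorem mainTheorem14 (R : realFieldType) (P : int -> vec3 R) (i : int) :
  proj_seq P -> three_nice P -> consec_noncollinear P ->
  in_affine (P (i - 2)) -> in_affine (P (i - 1)) ->
  in_affine (P i) -> in_affine (P (i + 1)) ->
  positive_triple (P (i - 2)) (P (i - 1)) (P i) ->
  positive_triple (P (i - 1)) (P i) (P (i + 1)) ->
  convex_quad (P (i - 2)) (P (i - 1)) (P i) (P (i + 1)) ->
  1 < corner_even P i -> 0 < corner_odd P i < 1 ->
  [/\ in_int_triangle (P (i + 2)) (P (i - 2)) (P (i - 1)) (P (i + 1)),
      convex_quad (P (i - 1)) (P i) (P (i + 1)) (P (i + 2)),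
      positive_triple (P i) (P (i + 1)) (P (i + 2)) &
      positive_triple (P (i - 1)) (P i) (P (i + 2))].
Proof.
move=> _ _ _ hA hB hC hD pABC _ hq H1 H2.
exact: core hA hB hC hD pABC hq H1 H2.
Qed.
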